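(* Let $n\in\mathbb{N}$, $m\in\mathbb{N}_0$, and suppose $L_n^{(m)}$ has a rational root $\bar x$. Then $\bar x\in\mathbb{N}$. Moreover, if $\bar x\in\mathbb{N}$ has prime factorization $\bar x=p_1^{n_1}\cdots p_k^{n_k}$, then $L_n^{(m)}(\bar x)=0$ is possible only if $n=p_1^{l_1}\cdots p_k^{l_k}$ for some $l_1,\dots,l_k\in\mathbb{N}_0$.
   Context: Generalized Laguerre polynomials: $L_n^{(\alpha)}(x)=\sum_{j=0}^n(-1)^j\binom{n+\alpha}{n-j}\frac{x^j}{j!}$. *)

(* Defs.v *)
From HB Require Import structures.
From mathcomp Require Import all_boot all_order all_algebra.
Set Implicit Arguments. Unset Strict Implicit. Unset Printing Implicit Defensive.
Import Order.TTheory GRing.Theory Num.Theory.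
Local Open Scope ring_scope.

Definition laguerre (n m : nat) : {poly rat} :=
  \sum_(j < n.+1)
     (((-1) ^+ j * ('C(n + m, n - j))%:R / (j`!)%:R) *: 'X^j).

(* Main.v *)
Require Import Defs.
From HB Require Import structures.
From mathcomp Require Import all_boot all_order all_algebra.
From mathcomp Require Import ring lra.
Import Order.TTheory GRing.Theory Num.Theory.
Local Open Scope ring_scope.

Definition cc (n m j : nat) : int := (-1) ^+ j * ('C(n + m, n - j) * n ^_ (n - j))%:R.

Lemma horner_lag n m (A B : int) : B != 0 ->
  ((\sum_(j < n.+1) cc n m j * A ^+ j * B ^+ (n - j))%:~R : rat) =
  (laguerre n m).[A%:~R / B%:~R] * (n`!)%:R * (B%:~R) ^+ n.
Proof.
move=> B0.
have B0' : (B%:~R : rat) != 0 by rewrite intr_eq0.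
rewrite /laguerre horner_sum rmorph_sum /= !mulr_suml; apply: eq_bigr => [[j /= ]].
rewrite ltnS => ljn.
rewrite hornerZ hornerXn /cc.
rewrite -(ffact_fact (leq_subr j n)) subKn // natrM.
rewrite -(subnKC ljn) exprD subnKC // => _.
rewrite !rmorphM /= !rmorphXn /= rmorphN1 !rmorph_nat.
rewrite expr_div_n.
have F0 : (j`!%:R : rat) != 0 by rewrite pnatr_eq0 -lt0n fact_gt0.
have BJ : (B%:~R : rat) ^+ j != 0 by rewrite expf_neq0.
field. by rewrite F0 BJ.
Qed.

Theorem proposition5 (n m : nat) (x : rat) :
  (0 < n)%N -> root (laguerre n m) x ->
  exists k : nat,
    [/\ (0 < k)%N, x = k%:R &
        forall p : nat, prime p -> (p %| n)%N -> (p %| k)%N].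
Proof.
move=> n0 /rootP rx.
set a := numq x; set b := denq x.
have b0 : b != 0 by rewrite gt_eqF // denq_gt0.
have xE : x = a%:~R / b%:~R by rewrite divq_num_den.
have F0 : \sum_(j < n.+1) cc n m j * a ^+ j * b ^+ (n - j) = 0.
  apply: (@intr_inj rat); rewrite horner_lag // -xE rx !mul0r.
  by rewrite rmorph0.
have ccn : cc n m n = (-1) ^+ n by rewrite /cc subnn bin0 ffactn0 mulr1.
have F0full := F0.
move: F0; rewrite big_ord_recr /= subnn expr0 mulr1 ccn => F0.
have Hsplit : forall d : int, (forall j : 'I_n, (d %| cc n m j * a ^+ j * b ^+ (n - j))%Z) ->
   (d %| a ^+ n)%Z.
  move=> d Hd.
  have : (d %| \sum_(i < n) cc n m (widen_ord (leqnSn n) i) * a ^+ i * b ^+ (n - i) 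
           + (-1) ^+ n * a ^+ n)%Z by rewrite F0 dvdz0.
  rewrite rpredDl; last by apply: rpred_sum => i _; exact: Hd.
  by rewrite rpredMsign.
have bn : (b %| a ^+ n)%Z.
  apply: Hsplit => j; apply: dvdz_mull; apply: dvdz_exp; last exact: dvdzz.
  by rewrite subn_gt0 ltn_ord.
have b1 : b = 1.
  have cop : coprimez b (a ^+ n).
    by apply: coprimezXr; rewrite coprimez_sym; exact: coprime_num_den.
  move: bn cop; rewrite dvdzE coprimezE /coprime => /gcdn_idPl -> /eqP h.
  by rewrite -[b]gtr0_norm ?denq_gt0 // -abszE h.
move: xE; rewrite b1 rmorph1 divr1 => xE.
have apos : 0 < a.
  rewrite ltNge; apply/negP => a0.
  move: F0full; rewrite b1 big_ord_recl.
  under eq_bigr do rewrite expr1n mulr1.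
  rewrite expr1n mulr1 => E.
  have h1 : 0 < cc n m (@ord0 n) * a ^+ (@ord0 n).
    rewrite /= /cc expr0 !mulr1 mul1r subn0 ltr0n muln_gt0 bin_gt0 leq_addr.
    by rewrite ffact_gt0 leqnn.
  have h2 : 0 <= \sum_(i < n) cc n m (lift ord0 i) * a ^+ (lift ord0 i).
    apply: sumr_ge0 => i _; rewrite /cc mulrAC -exprNn mulr_ge0 // ?ler0n //.
    by rewrite exprn_ge0 // oppr_ge0.
  by move: (ltr_pwDl h1 h2); rewrite E ltxx.
have aE : a = (`|a|%N)%:Z by rewrite abszE gtr0_norm.
exists `|a|%N; split.
- by rewrite -ltz_nat -aE.
- by rewrite xE {1}aE.
- move=> p pp pn.
  have na : (n%:Z %| a ^+ n)%Z.
    apply: Hsplit => j; apply: dvdz_mulr; apply: dvdz_mulr.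
    rewrite /cc; apply: dvdz_mull; rewrite natrM; apply: dvdz_mull.
    have -> : (n - j = (n - j).-1.+1)%N by rewrite prednK // subn_gt0 ltn_ord.
    by rewrite ffactnS natrM; apply: dvdz_mulr; rewrite natz; exact: dvdzz.
  move: na; rewrite dvdzE abszX /= => na.
  have : (p %| `|a| ^ n)%N by exact: dvdn_trans na.
  by rewrite Euclid_dvdX // => /andP[].
Qed.
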